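(* Let $0<\varepsilon<|B|$, $r>0$, $r_{\max}=r\sqrt{\log(|B|/\varepsilon)}$, and for $c\in\mathbb{R}^d$ let $K'_c(x)=K_c(x)$ if $\|x-c\|\le r_{\max}$ and $K'_c(x)=0$ otherwise. Then for every center $c\in\mathbb{R}^d$, \[ |\Phi(K_c)-\Phi(K'_c)|\le\varepsilon. \]
   Context: $B\subset\mathbb{R}^d$ finite nonempty, $m:B\to\{0,1\}$, $M=\{x\in B:m(x)=1\}$. Gaussian kernel with center $c$ and bandwidth $r$: $K_c(x)=\exp(-\|x-c\|^2/r^2)$. For $p,q\in[0,1]$ and $K:B\to[0,1]$: $g(x)=pK(x)+q(1-K(x))$, $\ell(p,q,K)=\frac{1}{|B|}\big(\sum_{x\in M}\log g(x)+\sum_{x\in B\setminus M}\log(1-g(x))\big)$ ($\log 0=-\infty$), $\ell_0(q)=\frac1{|B|}(|M|\log q+|B\setminus M|\log(1-q))$, and $\Phi(K)=\max_{p,q\in[0,1]}\ell(p,q,K)-\max_{q\in[0,1]}\ell_0(q)$. Standing assumption: the maximizer $(p^*,q^* )$ of $\ell(\cdot,\cdot,K)$ lies in $(0,1)^2$ with finite value. *)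

(* Defs.v *)
(* classical reals. Points of R^d are lists of reals of length d. *)
From Stdlib Require Import Reals Lra List.
Import ListNotations.
Open Scope R_scope.

Definition point := list R.

Definition sqdist (x c : point) : R :=
  fold_right Rplus 0 (map (fun ab => (fst ab - snd ab) ^ 2) (combine x c)).

Definition dist (x c : point) : R := sqrt (sqdist x c).

(* sum over the finite set B (given as a duplicate-free list) *)
Definition sumB (B : list point) (f : point -> R) : R :=
  fold_right Rplus 0 (map f B).

Definition gaussK (r : R) (c : point) (x : point) : R :=
  exp (- sqdist x c / r ^ 2).

Definition truncK (r rmax : R) (c : point) (x : point) : R :=
  if Rle_dec (dist x c) rmax then gaussK r c x else 0.

Definition gfun (p q : R) (K : point -> R) (x : point) : R :=
  p * K x + q * (1 - K x).

(* l(p,q,K) is finite (all log arguments positive) *)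
Definition ell_finite (B : list point) (m : point -> bool) (p q : R)
  (K : point -> R) : Prop :=
  forall x, In x B -> if m x then 0 < gfun p q K x else gfun p q K x < 1.

(* value of l(p,q,K) when finite *)
Definition ell (B : list point) (m : point -> bool) (p q : R) (K : point -> R) : R :=
  / INR (length B) *
  sumB B (fun x => if m x then ln (gfun p q K x) else ln (1 - gfun p q K x)).

Definition ell0_finite (B : list point) (m : point -> bool) (q : R) : Prop :=
  forall x, In x B -> if m x then 0 < q else q < 1.

Definition ell0 (B : list point) (m : point -> bool) (q : R) : R :=
  / INR (length B) * sumB B (fun x => if m x then ln q else ln (1 - q)).

Definition in01 (t : R) : Prop := 0 <= t <= 1.

(* L is max_{p,q in [0,1]} l(p,q,K) (finite value attained; -infinity values
   of l are simply dominated) *)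
Definition IsMaxEll (B : list point) (m : point -> bool) (K : point -> R) (L : R) : Prop :=
  (exists p q, in01 p /\ in01 q /\ ell_finite B m p q K /\ ell B m p q K = L) /\
  (forall p q, in01 p -> in01 q -> ell_finite B m p q K -> ell B m p q K <= L).

Definition IsMaxEll0 (B : list point) (m : point -> bool) (L0 : R) : Prop :=
  (exists q, in01 q /\ ell0_finite B m q /\ ell0 B m q = L0) /\
  (forall q, in01 q -> ell0_finite B m q -> ell0 B m q <= L0).

Definition IsPhi (B : list point) (m : point -> bool) (K : point -> R) (v : R) : Prop :=
  exists L L0, IsMaxEll B m K L /\ IsMaxEll0 B m L0 /\ v = L - L0.

Definition StandingAssumption (B : list point) (m : point -> bool) (K : point -> R) : Prop :=
  exists p q, 0 < p < 1 /\ 0 < q < 1 /\ ell_finite B m p q K /\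
    (forall p' q', in01 p' -> in01 q' -> ell_finite B m p' q' K ->
       ell B m p' q' K <= ell B m p q K).

(* Main.v *)
Require Import Defs.
From Stdlib Require Import Reals List Lra Psatz.
Open Scope R_scope.

Lemma ln_le' x y : 0 < x -> x <= y -> ln x <= ln y.
Proof.
  intros Hx Hxy. destruct (Req_dec x y) as [->|Hne]; [lra|].
  left. apply ln_increasing; lra.
Qed.

Lemma ln_le_sub1 y : 0 < y -> ln y <= y - 1.
Proof.
  intros Hy. destruct (Req_dec (ln y) 0) as [H|H].
  - rewrite H. assert (y = 1). { rewrite <- (exp_ln y) by lra. rewrite H, exp_0. reflexivity. } lra.
  - pose proof (exp_ineq1 _ H). rewrite exp_ln in H0 by lra. lra.
Qed.

Lemma sumB_ge B (f g : point -> R) a :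
  (forall x, In x B -> g x + a <= f x) -> sumB B g + INR (length B) * a <= sumB B f.
Proof.
  induction B as [|b B IH]; intros H.
  - unfold sumB; simpl. lra.
  - change (length (b :: B)) with (S (length B)). rewrite S_INR.
    unfold sumB in *; cbn [map fold_right].
    assert (H1 := H b (or_introl eq_refl)).
    assert (H2 := IH (fun x Hx => H x (or_intror Hx))). lra.
Qed.

Lemma sumB_le0 B (f : point -> R) :
  (forall x, In x B -> f x <= 0) -> sumB B f <= 0.
Proof.
  induction B as [|b B IH]; intros H; unfold sumB in *; simpl; [lra|].
  assert (H1 := H b (or_introl eq_refl)).
  assert (H2 := IH (fun x Hx => H x (or_intror Hx))). lra.
Qed.

Lemma sumB_ext B (f g : point -> R) :
  (forall x, In x B -> f x = g x) -> sumB B f = sumB B g.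
Proof.
  induction B as [|b B IH]; intros H; unfold sumB in *; simpl; [lra|].
  rewrite (H b (or_introl eq_refl)), (IH (fun x Hx => H x (or_intror Hx))). lra.
Qed.

Lemma sumB_const B a : sumB B (fun _ => a) = INR (length B) * a.
Proof.
  induction B as [|b B IH]; [unfold sumB; simpl; lra|].
  change (length (b :: B)) with (S (length B)). rewrite S_INR.
  unfold sumB in *; cbn [map fold_right]. rewrite IH. lra.
Qed.

Lemma lenpos (B : list point) : B <> nil -> 0 < INR (length B).
Proof. destruct B as [|b B]; [congruence|]. intros _. change (length (b :: B)) with (S (length B)). rewrite S_INR. pose proof (pos_INR (length B)). lra. Qed.

Lemma transfer B m K1 K2 p1 q1 p2 q2 c :
  B <> nil -> 0 < c ->
  (forall x, In x B -> c * gfun p1 q1 K1 x <= gfun p2 q2 K2 x /\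
                       c * (1 - gfun p1 q1 K1 x) <= 1 - gfun p2 q2 K2 x) ->
  ell_finite B m p1 q1 K1 ->
  ell_finite B m p2 q2 K2 /\ ell B m p1 q1 K1 + ln c <= ell B m p2 q2 K2.
Proof.
  intros HB Hc H Hf. split.
  - intros x Hx. specialize (H x Hx). specialize (Hf x Hx).
    destruct (m x); nra.
  - unfold ell.
    assert (Hs := sumB_ge B
      (fun x => if m x then ln (gfun p2 q2 K2 x) else ln (1 - gfun p2 q2 K2 x))
      (fun x => if m x then ln (gfun p1 q1 K1 x) else ln (1 - gfun p1 q1 K1 x))
      (ln c)).
    assert (Hs' : sumB B (fun x => if m x then ln (gfun p1 q1 K1 x) else ln (1 - gfun p1 q1 K1 x)) +
      INR (length B) * ln c <=
      sumB B (fun x => if m x then ln (gfun p2 q2 K2 x) else ln (1 - gfun p2 q2 K2 x))).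
    { apply Hs. intros x Hx. specialize (H x Hx). specialize (Hf x Hx).
      destruct (m x).
      - rewrite Rplus_comm, <- ln_mult by lra. apply ln_le'; nra.
      - rewrite Rplus_comm, <- ln_mult by lra. apply ln_le'; nra. }
    pose proof (lenpos B HB) as Hn.
    set (S1 := sumB _ _) in *. set (S2 := sumB _ _) in Hs' |- *.
    assert (Hi : 0 < / INR (length B)) by (apply Rinv_0_lt_compat; lra).
    assert (/ INR (length B) * (S1 + INR (length B) * ln c) <= / INR (length B) * S2)
      by (apply Rmult_le_compat_l; lra).
    rewrite Rmult_plus_distr_l, <- Rmult_assoc, Rinv_l in H0 by lra. lra.
Qed.

Lemma max_le0 B m K L :
  (forall x, In x B -> 0 <= K x <= 1) -> IsMaxEll B m K L -> L <= 0.
Proof.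
  intros HK [[p [q [Hp [Hq [Hf <-]]]]] _].
  unfold ell. unfold in01 in *.
  assert (0 <= / INR (length B)).
  { destruct B. simpl. rewrite Rinv_0. lra. left. apply Rinv_0_lt_compat, lenpos. congruence. }
  assert (sumB B (fun x => if m x then ln (gfun p q K x) else ln (1 - gfun p q K x)) <= 0).
  { apply sumB_le0. intros x Hx. specialize (Hf x Hx). specialize (HK x Hx).
    assert (gfun p q K x <= 1 /\ 0 <= gfun p q K x) by (unfold gfun; nra).
    destruct (m x).
    - rewrite <- ln_1. apply ln_le'; lra.
    - rewrite <- ln_1. apply ln_le'; lra. }
  nra.
Qed.

Lemma max_ge_ell0 B m K L q :
  IsMaxEll B m K L -> in01 q -> ell0_finite B m q -> ell0 B m q <= L.
Proof.
  intros [_ Hs] Hq Hf.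
  assert (E : ell B m q q K = ell0 B m q).
  { unfold ell, ell0. f_equal. apply sumB_ext. intros x _.
    unfold gfun. replace (q * K x + q * (1 - K x)) with q by ring. reflexivity. }
  rewrite <- E. apply Hs; auto.
  intros x Hx. specialize (Hf x Hx). unfold gfun.
  replace (q * K x + q * (1 - K x)) with q by ring. exact Hf.
Qed.

Lemma sqdist_nonneg x c : 0 <= sqdist x c.
Proof.
  revert c; induction x as [|a x IH]; intros [|b c]; unfold sqdist; cbn [combine map fold_right fst snd]; try lra.
  pose proof (IH c) as H. unfold sqdist in H. pose proof (pow2_ge_0 (a - b)). lra.
Qed.

Theorem lemmaA3 (d : nat) (B : list point) (m : point -> bool) (eps r : R) :
  B <> nil -> NoDup B -> (forall x, In x B -> length x = d) ->
  0 < eps -> eps < INR (length B) -> 0 < r ->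
  forall c : point, length c = d ->
  let rmax := r * sqrt (ln (INR (length B) / eps)) in
  StandingAssumption B m (gaussK r c) ->
  StandingAssumption B m (truncK r rmax c) ->
  forall v1 v2, IsPhi B m (gaussK r c) v1 -> IsPhi B m (truncK r rmax c) v2 ->
  Rabs (v1 - v2) <= eps.
Proof.
  intros HB _ _ Heps Hepsn Hr c _ rmax _ _ v1 v2
    [L1 [L0 [HM1 [HM0 ->]]]] [L2 [L0' [HM2 [HM0' ->]]]].
  assert (EL0 : L0' = L0).
  { destruct HM0 as [[q [Hq [Hf <-]]] Hs]. destruct HM0' as [[q' [Hq' [Hf' <-]]] Hs'].
    apply Rle_antisym; auto. }
  subst L0'.
  pose proof (lenpos B HB) as Hn.
  set (n := INR (length B)) in *.
  set (t := eps / n).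
  assert (Ht : 0 < t < 1).
  { unfold t. split. apply Rdiv_lt_0_compat; lra.
    apply (Rmult_lt_reg_r n); auto. unfold Rdiv. rewrite Rmult_assoc, Rinv_l; lra. }
  assert (Hte : t <= eps).
  { assert (1 <= n).
    { unfold n. destruct B; [congruence|]. simpl length. rewrite S_INR.
      pose proof (pos_INR (length B)). lra. }
    unfold t. apply (Rmult_le_reg_r n); [lra|]. unfold Rdiv. rewrite Rmult_assoc, Rinv_l; nra. }
  assert (Kg : forall x, 0 < gaussK r c x <= 1).
  { intros x. unfold gaussK. split. apply exp_pos. rewrite <- exp_0.
    destruct (Req_dec (- sqdist x c / r ^ 2) 0) as [E|E]; [rewrite E; lra|].
    left. apply exp_increasing. pose proof (sqdist_nonneg x c).
    assert (0 < r ^ 2) by (apply pow_lt; lra).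
    assert (0 <= sqdist x c / r ^ 2) by (unfold Rdiv; apply Rmult_le_pos; [lra| left; apply Rinv_0_lt_compat; lra]).
    unfold Rdiv in *. lra. }
  assert (Far : forall x, ~ Defs.dist x c <= rmax -> gaussK r c x < t).
  { intros x Hd. apply Rnot_le_lt in Hd.
    assert (Hl : 0 < ln (n / eps)).
    { rewrite <- ln_1. apply ln_increasing; [lra|].
      apply (Rmult_lt_reg_r eps); auto. unfold Rdiv. rewrite Rmult_assoc, Rinv_l; lra. }
    assert (Hsq : r ^ 2 * ln (n / eps) < sqdist x c).
    { unfold Defs.dist, rmax in Hd. pose proof (sqdist_nonneg x c).
      pose proof (sqrt_sqrt _ H). pose proof (sqrt_sqrt _ (Rlt_le _ _ Hl)).
      pose proof (sqrt_pos (ln (n / eps))).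
      assert (0 <= r * sqrt (ln (n / eps))) by nra. nra. }
    assert (Hr2 : 0 < r ^ 2) by (apply pow_lt; lra).
    unfold gaussK.
    replace t with (exp (- ln (n / eps))).
    - apply exp_increasing. apply (Rmult_lt_reg_r (r ^ 2)); auto.
      unfold Rdiv. rewrite Rmult_assoc, Rinv_l by lra. nra.
    - rewrite exp_Ropp, exp_ln. unfold t. field. lra.
      apply Rdiv_lt_0_compat; lra. }
  assert (Rel : forall x, (truncK r rmax c x = gaussK r c x) \/
                          (truncK r rmax c x = 0 /\ gaussK r c x < t)).
  { intros x. unfold truncK. destruct (Rle_dec (Defs.dist x c) rmax) as [h|h]; auto. }
  assert (DA : L2 + ln (1 - t) <= L1).
  { destruct HM2 as [[p [q [Hp [Hq [Hf <-]]]]] _].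
    destruct (transfer B m (truncK r rmax c) (gaussK r c) p q p q (1 - t) HB) as [Hf2 Hle];
      [lra| |exact Hf|].
    { intros x _. unfold gfun, in01 in *. specialize (Kg x).
      destruct (Rel x) as [E|[E Hk]]; rewrite E.
      - set (k := gaussK r c x) in *. set (g := p * k + q * (1 - k)).
        assert (0 <= g <= 1) by (unfold g; nra). nra.
      - set (k := gaussK r c x) in *.
        split; nra. }
    destruct HM1 as [_ Hs]. specialize (Hs p q Hp Hq Hf2). lra. }
  set (dl := t / (1 + t)).
  assert (DB : L1 + ln (/ (1 + t)) <= L2).
  { destruct HM1 as [[p [q [Hp [Hq [Hf <-]]]]] _].
    assert (Hdl : dl = t * / (1 + t)) by reflexivity.
    assert (Hi : 0 < / (1 + t) < 1).
    { split. apply Rinv_0_lt_compat; lra. rewrite <- Rinv_1. apply Rinv_lt_contravar; lra. }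
    assert (Hsum : / (1 + t) + dl = 1) by (unfold dl; field; lra).
    destruct (transfer B m (gaussK r c) (truncK r rmax c) p q p (/ (1 + t) * q + dl * p) (/ (1 + t)) HB)
      as [Hf2 Hle]; [lra| |exact Hf|].
    { intros x _. unfold gfun, in01 in *. specialize (Kg x).
      destruct (Rel x) as [E|[E Hk]]; rewrite E.
      - nra.
      - assert (/ (1 + t) * gaussK r c x <= dl) by (rewrite Hdl; nra).
        set (k := gaussK r c x) in *. set (a := / (1 + t)) in *.
        assert (0 <= (dl - a * k) * p) by nra.
        assert (0 <= (dl - a * k) * (1 - p)) by nra.
        assert (0 <= a * k * q) by (apply Rmult_le_pos; nra).
        assert (0 <= a * k * (1 - q)) by (apply Rmult_le_pos; nra).
        split; nra. }
    assert (Hq' : in01 (/ (1 + t) * q + dl * p)).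
    { unfold in01 in *. assert (0 <= dl) by (rewrite Hdl; nra).
      assert (0 <= / (1 + t) * q <= / (1 + t)) by (split; nra).
      assert (0 <= dl * p <= dl) by (split; nra). split; lra. }
    destruct HM2 as [_ Hs]. apply Rle_trans with (2 := Hs _ _ Hp Hq' Hf2).
    lra. }
  apply Rabs_le. split.
  -
    assert (HL1 : L0 <= L1).
    { destruct HM0 as [[q [Hq [Hf <-]]] _]. eapply max_ge_ell0; eauto. }
    assert (HL2 : L2 <= 0).
    { eapply max_le0; [|exact HM2]. intros x _. specialize (Kg x).
      destruct (Rel x) as [E|[E _]]; rewrite E; lra. }
    destruct (Rle_lt_dec 1 eps) as [He1|He1].
    + assert (L0 >= - 1).
      { destruct HM0 as [_ Hs].
        assert (Hh : ell0 B m (/ 2) <= L0).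
        { apply Hs. unfold in01; lra. intros x _. destruct (m x); lra. }
        unfold ell0 in Hh.
        rewrite (sumB_ext B _ (fun _ => ln (/ 2))) in Hh by (intros x _; destruct (m x); [reflexivity|]; f_equal; field).
        rewrite sumB_const in Hh. fold n in Hh.
        rewrite <- Rmult_assoc, Rinv_l in Hh by lra.
        rewrite ln_Rinv in Hh by lra.
        assert (ln 2 < 1).
        { rewrite <- (ln_exp 1). apply ln_increasing; [lra|].
          pose proof (exp_ineq1 1 ltac:(lra)). lra. }
        lra. }
      lra.
    + destruct B as [|b [|b' B']]; [congruence| |].
      *
        assert (0 <= L0).
        { destruct HM0 as [_ Hs].
          assert (Hh : ell0 (b :: nil) m (if m b then 1 else 0) <= L0).
          { apply Hs. unfold in01; destruct (m b); lra.
            intros x [<-|[]]. destruct (m b); lra. }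
          unfold ell0, sumB in Hh; simpl in Hh. destruct (m b).
          - rewrite ln_1 in Hh. lra.
          - replace (1 - 0) with 1 in Hh by lra. rewrite ln_1 in Hh. lra. }
        lra.
      * assert (n2 : 2 <= n).
        { unfold n. simpl length. rewrite !S_INR. pose proof (pos_INR (length B')). lra. }
        assert (Ht2 : t <= 1 / 2).
        { unfold t. apply (Rmult_le_reg_r n); [lra|]. unfold Rdiv. rewrite Rmult_assoc, Rinv_l; lra. }
        assert (t * n = eps) by (unfold t; field; lra).
        assert (- ln (1 - t) <= 2 * t).
        { rewrite <- ln_Rinv by lra. pose proof (ln_le_sub1 (/ (1 - t)) ltac:(apply Rinv_0_lt_compat; lra)).
          assert (/ (1 - t) - 1 <= 2 * t).
          { replace (/ (1 - t) - 1) with (t / (1 - t)) by (field; lra).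
            apply (Rmult_le_reg_r (1 - t)); [lra|]. unfold Rdiv. rewrite Rmult_assoc, Rinv_l; nra. }
          lra. }
        nra.
  - rewrite ln_Rinv in DB by lra.
    pose proof (ln_le_sub1 (1 + t) ltac:(lra)). lra.
Qed.
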